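(* Let $A(0)=1$ and $A(n)=nA(n-1)+1$ for $n\ge1$. Then: (i) The map $n\mapsto A(n)$ on $\{0,1,2,\dots\}$ extends uniquely to a continuous function $\tilde A:\mathbb{Z}_2\to\mathbb{Z}_2$. (ii) For each $k\ge1$ there is a unique $c_k\in[0,2^k)\cap\mathbb{Z}$ with $A(c_k)\equiv 0\pmod{2^k}$. (iii) The limit $c=\lim_{k\to\infty}c_k$ exists in $\mathbb{Z}_2$ and is the unique zero of $\tilde A$; its $2$-adic expansion begins $11001110010100010100110001\ldots$ (digits listed from the $2^0$ place upward). (iv) For every $n\in\mathbb{Z}_2$, $|\tilde A(n)|_2=|n-c|_2$.
   Context: $\mathbb{Z}_2$ denotes the $2$-adic integers and $|\cdot|_2$ the $2$-adic absolute value, normalized so that $|x|_2=2^{-v}$ where $2^v$ exactly divides $x$. *)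

(* Defs.v *)
From Stdlib Require Import ClassicalEpsilon.
From mathcomp Require Import all_boot all_algebra.
Set Implicit Arguments. Unset Strict Implicit. Unset Printing Implicit Defensive.
Import GRing.Theory Num.Theory.

Fixpoint A (n : nat) : nat :=
  match n with 0 => 1 | m.+1 => m.+1 * A m + 1 end.

(* 2-adic integers as the inverse limit of Z/2^k Z:
   x k is the residue (in [0,2^k)) of x modulo 2^k. *)
Definition Z2 := {x : nat -> nat | forall k, x k < 2 ^ k /\ x k.+1 %% 2 ^ k = x k}.

Definition res (x : Z2) (k : nat) : nat := proj1_sig x k.

Lemma Z2_of_nat_proof (n : nat) :
  forall k, n %% 2 ^ k < 2 ^ k /\ (n %% 2 ^ k.+1) %% 2 ^ k = n %% 2 ^ k.
Proof.
move=> k; split; first by rewrite ltn_pmod // expn_gt0.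
by rewrite modn_dvdm // dvdn_exp2l.
Qed.

Definition Z2_of_nat (n : nat) : Z2 := exist _ (fun k => n %% 2 ^ k) (Z2_of_nat_proof n).

Definition Z2_continuous (f : Z2 -> Z2) : Prop :=
  forall (x : Z2) (k : nat), exists m : nat,
    forall y : Z2, res y m = res x m -> res (f y) k = res (f x) k.

Definition Z2_lim (u : nat -> Z2) (l : Z2) : Prop :=
  forall k, exists N, forall m, N <= m -> res (u m) k = res l k.

(* 2-adic distance |x - y|_2 = 2^(-v), v = 2-adic valuation of x - y;
   v = (least k with x and y different mod 2^k) - 1; distance 0 if x = y. *)
Definition Z2_dist (x y : Z2) : rat :=
  match excluded_middle_informative (exists k, res x k != res y k) with
  | left H => ((2 ^ (ex_minn H).-1)%:R)^-1
  | right _ => 0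
  end.

Definition Z2_abs (x : Z2) : rat := Z2_dist x (Z2_of_nat 0).

Definition Z2_digit (x : Z2) (i : nat) : nat := res x i.+1 %/ 2 ^ i.

Definition c_digits : seq nat :=
  [:: 1; 1; 0; 0; 1; 1; 1; 0; 0; 1; 0; 1; 0; 0; 0; 1; 0; 1; 0; 0; 1; 1; 0; 0; 0; 1].

(* Main.v *)
Require Import Defs.
From Stdlib Require Import NArith PeanoNat ProofIrrelevance FunctionalExtensionality ClassicalEpsilon.
From mathcomp Require Import all_boot all_algebra zify ring.

Lemma A_odd n : odd (A n) = ~~ odd n.
Proof. by elim: n => [//|n IH] /=; rewrite oddD oddM IH /=; case: (odd n). Qed.

Lemma A_par n : exists b, A n + n = b.*2 + 1.
Proof.
exists (A n + n)./2; rewrite -[LHS]odd_double_half oddD A_odd.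
by case: (odd n); rewrite addn1.
Qed.

Lemma half_pair n : exists t, n * n.-1 = t.*2.
Proof.
exists (n * n.-1)./2; rewrite -[LHS]odd_double_half oddM.
by case: n => [|n] //=; case: (odd n).
Qed.

Lemma A_shift h n : ~~ odd h -> 0 < h ->
  A (n + h) = A n + n * h %[mod h.*2].
Proof.
move=> eh hp.
have [e He] : exists e, h = e.*2 by exists h./2; rewrite -[LHS]odd_double_half (negbTE eh).
elim: n => [|n IH].
  rewrite add0n mul0n addn0.
  case: h eh hp He => [//|h'] eh _ He /=.
  have oh' : odd h' by move: eh; rewrite /=; case: (odd h').
  have [a Ha] : exists a, A h' = a.*2.
    exists (A h')./2; rewrite -[LHS]odd_double_half A_odd oh' /=. by [].
  by rewrite Ha -doubleMr doubleMl mulnC modnMDl.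
rewrite addSn /= -modnDml -modnMmr IH modnMmr modnDml.
rewrite He; clear IH; move: (A n) (A_odd n) => X HX.
rewrite -(odd_double_half X) -(odd_double_half n) HX.
case: (odd n) => /=; move: (X./2) (n./2) => x m; rewrite ?add0n ?add1n.
  have -> : (m.*2.+1 + e.*2).+1 * (x.*2 + m.*2.+1 * e.*2) + 1 =
     (m.*2.+2 * x.*2 + 1 + m.*2.+2 * e.*2) + (e.*2).*2 * (x + 2 * m * (m + 1) + e * (2 * m + 1)).
    rewrite -!muln2. ring.
  by rewrite [in LHS]addnC mulnC modnMDl.
have -> : (m.*2 + (e.*2) ).+1 * (x.*2.+1 + m.*2 * e.*2) + 1 = (m.*2.+1 * x.*2.+1 + 1 + m.*2.+1 * e.*2) + (e.*2).*2 * (x + 2 * m * m + 2 * m * e).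
  rewrite -!muln2. ring.
by rewrite [in LHS]addnC mulnC modnMDl.
Qed.

Lemma A_per_add k r q : A (r + q * 2 ^ k) = A r %[mod 2 ^ k].
Proof.
case: k => [|k]; first by rewrite !modn1.
have eh : ~~ odd (2 ^ k.+1) by rewrite oddX.
have hp : 0 < 2 ^ k.+1 by rewrite expn_gt0.
elim: q => [|q IH]; first by rewrite mul0n addn0.
rewrite mulSnr addnA.
have := @A_shift (2 ^ k.+1) (r + q * 2 ^ k.+1) eh hp.
move/(congr1 (fun x => x %% 2 ^ k.+1)).
rewrite !modn_dvdm ?dvdn_mull // -?mul2n ?dvdn_mull // => ->.
by rewrite -modnDmr modnMl addn0 IH.
Qed.

Lemma A_per k n m : n = m %[mod 2 ^ k] -> A n = A m %[mod 2 ^ k].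
Proof.
move=> E.
rewrite (divn_eq n (2 ^ k)) (divn_eq m (2 ^ k)) !(addnC (_ * _)) !A_per_add.
by rewrite E.
Qed.

Lemma dvd_mod {d m n} : m = n %[mod d] -> (d %| m) = (d %| n).
Proof. by rewrite /dvdn => ->. Qed.

Lemma hensel k r : 0 < k -> 2 ^ k %| A r ->
  (2 ^ k.+1 %| A (r + 2 ^ k)) = ~~ (2 ^ k.+1 %| A r).
Proof.
move=> kp /dvdnP [a Ha].
have eh : ~~ odd (2 ^ k) by rewrite oddX; case: (k) kp.
have hp : 0 < 2 ^ k by rewrite expn_gt0.
have E2 : 2 ^ k.+1 = (2 ^ k).*2 by rewrite expnS mul2n.
rewrite E2 (dvd_mod (@A_shift (2 ^ k) r eh hp)) Ha.
have or : odd r.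
  have : ~~ odd (A r) by rewrite Ha oddM (negbTE eh) andbF.
  by rewrite A_odd negbK.
rewrite -(odd_double_half r) or add1n.
have -> : a * 2 ^ k + (r./2.*2.+1) * 2 ^ k = (a.+1) * 2 ^ k + (2 ^ k).*2 * r./2.
  rewrite -!muln2; ring.
rewrite addnC [_.*2 * _]mulnC (dvd_mod (modnMDl _ _ _)).
rewrite -!muln2 !(mulnC _ (2 ^ k)) !dvdn_pmul2l //.
by rewrite !dvdn2 /= negbK.
Qed.

Fixpoint cf (k : nat) : nat :=
  match k with
  | 0 => 0
  | k'.+1 => if 2 ^ k'.+1 %| A (cf k') then cf k' else cf k' + 2 ^ k'
  end.

Lemma cf_lt k : cf k < 2 ^ k.
Proof.
elim: k => [//|k IH] /=; rewrite expnS mul2n -addnn.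
case: ifP => _; last by rewrite ltn_add2r.
by apply: (leq_trans IH); rewrite leq_addr.
Qed.

Lemma cf_mod k : cf k.+1 %% 2 ^ k = cf k.
Proof.
rewrite /=; case: ifP => _; first by rewrite modn_small ?cf_lt.
by rewrite -modnDmr modnn addn0 modn_small ?cf_lt.
Qed.

Lemma cf_spec k n : (2 ^ k %| A n) = (n %% 2 ^ k == cf k).
Proof.
elim: k n => [|k IH] n; first by rewrite expn0 dvd1n modn1.
case: (posnP k) => [->|kp].
  rewrite /= expn1 modn2 dvdn2 A_odd negbK.
  by case: (odd n).
set h := 2 ^ k.
have E2 : 2 ^ k.+1 = h * 2 by rewrite expnS mulnC.
have hp : 0 < h by rewrite expn_gt0.
have hd : h %| 2 ^ k.+1 by rewrite E2 dvdn_mulr.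
have cfS : cf k.+1 = if 2 ^ k.+1 %| A (cf k) then cf k else cf k + h by [].
case Hh: (h %| A n); last first.
  have L : ~~ (2 ^ k.+1 %| A n) by apply/negP => /(dvdn_trans hd); rewrite Hh.
  have R : n %% 2 ^ k.+1 != cf k.+1.
    by apply/eqP => H2; move: Hh; rewrite IH -(modn_dvdm _ hd) H2 cf_mod eqxx.
  by rewrite (negbTE L) (negbTE R).
have hk : h %| A (cf k) by rewrite IH modn_small ?cf_lt.
move: Hh; rewrite IH => /eqP Hn.
set t := n %% 2 ^ k.+1.
have Et : t = t %/ h * h + cf k by rewrite {1}(divn_eq t h) /t modn_dvdm // Hn.
have qlt : t %/ h < 2 by rewrite ltn_divLR // mulnC -E2 /t ltn_pmod // expn_gt0.
rewrite (dvd_mod (@A_per _ _ _ (esym (modn_mod n (2 ^ k.+1))))) -/t.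
have hensk := @hensel _ _ kp hk.
rewrite cfS; case D: (2 ^ k.+1 %| A (cf k)); rewrite D in hensk.
  move: Et qlt; case: (t %/ h) => [|[|//]] Et _; rewrite Et.
    by rewrite mul0n add0n D eqxx.
  rewrite mul1n addnC hensk; apply/esym/negbTE.
  by rewrite -{2}(addn0 (cf k)) eqn_add2l -lt0n.
move: Et qlt; case: (t %/ h) => [|[|//]] Et _; rewrite Et.
  by rewrite mul0n add0n D; apply/esym/negbTE; rewrite -{1}(addn0 (cf k)) eqn_add2l eq_sym -lt0n.
by rewrite mul1n addnC hensk eqxx.
Qed.

Lemma expn_pow m n : m ^ n = Nat.pow m n.
Proof. elim: n => [|n IH]; first by rewrite expn0. by rewrite expnS IH mulnE. Qed.

Lemma modn_Nmod m d : 0 < d -> m %% d = Nat.modulo m d.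
Proof.
move=> dp; apply: (Nat.mod_unique m d (m %/ d)); first by apply/ltP; rewrite ltn_pmod.
by rewrite -mulnE mulnC plusE -divn_eq.
Qed.

Lemma ofN_mul m n : N.of_nat (m * n) = N.mul (N.of_nat m) (N.of_nat n).
Proof. by rewrite mulnE Nat2N.inj_mul. Qed.
Lemma ofN_add m n : N.of_nat (m + n) = N.add (N.of_nat m) (N.of_nat n).
Proof. by rewrite -plusE Nat2N.inj_add. Qed.
Lemma ofN_exp m n : N.of_nat (m ^ n) = N.pow (N.of_nat m) (N.of_nat n).
Proof. by rewrite expn_pow Nat2N.inj_pow. Qed.

Lemma dvdnN d x : 0 < d ->
  (d %| x) = N.eqb (N.modulo (N.of_nat x) (N.of_nat d)) N0.
Proof.
move=> dp; rewrite /dvdn modn_Nmod // -Nat2N.inj_mod.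
apply/eqP/idP.
  by move=> ->; rewrite N.eqb_refl.
move/N.eqb_spec => H; apply/Nat2N.inj_iff. exact: H.
Qed.

Fixpoint ffN (x : N) (m : nat) : N :=
  match m with 0 => Npos xH | m'.+1 => N.mul x (ffN (N.pred x) m') end.

Lemma ofN_ffact n m : N.of_nat (n ^_ m) = ffN (N.of_nat n) m.
Proof.
elim: m n => [|m IH] n; first by rewrite ffactn0.
by rewrite ffactnS ofN_mul IH /= -Nat2N.inj_pred.
Qed.

Fixpoint sffN (x : N) (m : nat) : N :=
  match m with 0 => N0 | m'.+1 => N.add (sffN x m') (ffN x m') end.

Definition S30 (n : nat) := \sum_(0 <= i < 30) n ^_ i.

Lemma ofN_S30 n : N.of_nat (S30 n) = sffN (N.of_nat n) 30.
Proof.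
rewrite /S30; elim: 30 => [|m IH]; first by rewrite big_geq.
by rewrite big_nat_recr //= ofN_add IH ofN_ffact.
Qed.

Lemma dvdnN' d x X D : 0 < d -> N.of_nat x = X -> N.of_nat d = D ->
  (d %| x) = N.eqb (N.modulo X D) N0.
Proof. by move=> dp <- <-; apply: dvdnN. Qed.

Lemma dvd_30fact : 2 ^ 26 %| 30`!.
Proof.
have H2 : 0 < 2 ^ 26 by rewrite expn_gt0.
rewrite -ffactnn (dvdnN' _ _ _ _ H2 (ofN_ffact 30 30) (ofN_exp 2 26)).
vm_compute. reflexivity.
Qed.

Lemma A_sum n : A n = \sum_(0 <= i < n.+1) n ^_ i.
Proof.
elim: n => [|n IH]; first by rewrite big_nat1 ffactn0.
rewrite /= IH [RHS]big_nat_recl // ffactn0 [RHS]addnC; congr (_ + _).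
rewrite big_distrr /=; apply: eq_bigr => i _; by rewrite ffactSS.
Qed.

Lemma A_sumM n M : n < M -> A n = \sum_(0 <= i < M) n ^_ i.
Proof.
move=> nM; rewrite A_sum (@big_cat_nat _ _ _ n.+1 0 M _ _ (leq0n _) nM) /=.
by rewrite [X in _ = _ + X]big1_seq ?addn0 // => i /andP [_]; rewrite mem_iota => /andP [Hi _]; rewrite ffact_small.
Qed.

Lemma A_S30 n : A n = S30 n %[mod 2 ^ 26].
Proof.
have M := leq_maxl 30 n.+1.
have nM : n < maxn 30 n.+1 by rewrite leq_maxr.
rewrite (A_sumM _ _ nM) /S30 (@big_cat_nat _ _ _ 30 0 _ _ _ (leq0n _) M) /=.
rewrite -modnDmr.
have H : 2 ^ 26 %| \sum_(30 <= i < maxn 30 n.+1) n ^_ i.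
  rewrite big_nat_cond; apply: dvdn_sum => i /andP [/andP [Hi _] _].
  rewrite -bin_ffact; apply: dvdn_mull; apply: (dvdn_trans dvd_30fact).
  rewrite -(ffact_fact (leq_subr 30 i)) (subKn Hi); apply: dvdn_mull; exact: dvdnn.
rewrite /dvdn in H; rewrite (eqP H) addn0.
reflexivity.
Qed.

Fixpoint vN (i : nat) : N :=
  match i with
  | 0 => N0
  | i'.+1 => N.add (vN i') (N.mul (N.of_nat (nth 0 c_digits i')) (N.pow (N.of_nat 2) (N.of_nat i')))
  end.

Definition checkb : bool :=
  all (fun i => N.eqb (N.modulo (sffN (vN i) 30) (N.pow (N.of_nat 2) (N.of_nat i.+1))) N0
                 == (nth 0 c_digits i == 0)) (iota 0 26).

Lemma checkbT : checkb = true.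
Proof. vm_compute. reflexivity. Qed.

Lemma digits01 i : nth 0 c_digits i < 2.
Proof.
have : all (fun d => d < 2) c_digits by [].
move/allP => H; case: (ltnP i (size c_digits)) => Hi.
  by apply: H; apply: mem_nth.
by rewrite nth_default.
Qed.

Lemma cf_step i : i < 26 -> N.of_nat (cf i) = vN i ->
  (2 ^ i.+1 %| A (cf i)) = (nth 0 c_digits i == 0).
Proof.
move=> Hi Hv.
have H26 : 2 ^ i.+1 %| 2 ^ 26 by rewrite dvdn_exp2l.
have E := A_S30 (cf i).
move: E => /(congr1 (fun x => x %% 2 ^ i.+1)); rewrite !modn_dvdm // => E.
rewrite (dvd_mod E).
have Hp : 0 < 2 ^ i.+1 by rewrite expn_gt0.
rewrite (dvdnN' _ _ _ _ Hp (ofN_S30 (cf i)) (ofN_exp 2 i.+1)) Hv.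
have := checkbT; rewrite /checkb => /allP /(_ i).
rewrite mem_iota add0n leq0n Hi => /(_ isT) /eqP.
exact: (fun h => h).
Qed.

Lemma cf_vN i : i <= 26 -> N.of_nat (cf i) = vN i.
Proof.
elim: i => [//|i IH] Hi.
have Hi' : i < 26 by [].
have Hv := IH (ltnW Hi).
have cfS : cf i.+1 = if 2 ^ i.+1 %| A (cf i) then cf i else cf i + 2 ^ i by [].
have vS : vN i.+1 = N.add (vN i) (N.mul (N.of_nat (nth 0 c_digits i)) (N.pow (N.of_nat 2) (N.of_nat i))) by [].
rewrite cfS (cf_step _ Hi' Hv) vS.
move: (digits01 i); case: (nth 0 c_digits i) => [|[|//]] _.
  rewrite eqxx Hv N.mul_0_l N.add_0_r. reflexivity.
rewrite ofN_add Hv ofN_exp N.mul_1_l. reflexivity.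
Qed.

Lemma Z2_eq (x y : Z2) : (forall k, res x k = res y k) -> x = y.
Proof.
case: x => f p; case: y => g q /= H.
have E : f = g := functional_extensionality _ _ H.
subst g; f_equal; apply: proof_irrelevance.
Qed.

Lemma res_lt (x : Z2) k : res x k < 2 ^ k.
Proof. exact: (proj1 (proj2_sig x k)). Qed.

Lemma res_S (x : Z2) k : res x k.+1 %% 2 ^ k = res x k.
Proof. exact: (proj2 (proj2_sig x k)). Qed.

Lemma res_le (x : Z2) m m' : m <= m' -> res x m' %% 2 ^ m = res x m.
Proof.
move/subnKC => <-; elim: (m' - m) => [|d IH].
  by rewrite addn0 modn_small ?res_lt.
by rewrite addnS -(@modn_dvdm (2 ^ (m + d)) _ (2 ^ m) (dvdn_exp2l 2 (leq_addr d m))) res_S IH.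
Qed.

Definition At_fun (x : Z2) k := A (res x k) %% 2 ^ k.

Lemma At_proof (x : Z2) : forall k, At_fun x k < 2 ^ k /\ At_fun x k.+1 %% 2 ^ k = At_fun x k.
Proof.
move=> k; split; first by rewrite /At_fun ltn_pmod // expn_gt0.
rewrite /At_fun modn_dvdm ?dvdn_exp2l //.
apply: A_per; rewrite res_S modn_small //; exact: res_lt.
Qed.

Definition At (x : Z2) : Z2 := exist _ (At_fun x) (At_proof x).

Lemma resAt x k : res (At x) k = A (res x k) %% 2 ^ k.
Proof. by []. Qed.

Definition cZ : Z2 := exist (fun x : nat -> nat => forall k, x k < 2 ^ k /\ x k.+1 %% 2 ^ k = x k) cf (fun k => conj (cf_lt k) (cf_mod k)).

Lemma rescZ k : res cZ k = cf k.
Proof. by []. Qed.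

Lemma resN n k : res (Z2_of_nat n) k = n %% 2 ^ k.
Proof. by []. Qed.

Lemma dist_eq x y x' y' :
  (forall k, (res x k != res y k) = (res x' k != res y' k)) ->
  Z2_dist x y = Z2_dist x' y'.
Proof.
move=> E; rewrite /Z2_dist.
case: (excluded_middle_informative _) => H1; case: (excluded_middle_informative _) => H2.
- have -> : ex_minn H1 = ex_minn H2; last by [].
  case: ex_minnP => m1 P1 M1; case: ex_minnP => m2 P2 M2.
  apply/eqP; rewrite eqn_leq M1 ?E // M2 // -E //.
- by exfalso; apply: H2; case: H1 => k Hk; exists k; rewrite -E.
- by exfalso; apply: H1; case: H2 => k Hk; exists k; rewrite E.
- by [].
Qed.

Lemma cf_uniq k y : y < 2 ^ k -> 2 ^ k %| A y -> y = cf k.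
Proof. by move=> yl; rewrite cf_spec modn_small // => /eqP. Qed.

Theorem propositionA10 :
  (* (ii) *)
  (forall k : nat, 1 <= k -> exists! ck : nat, ck < 2 ^ k /\ 2 ^ k %| A ck) /\
  exists (At : Z2 -> Z2) (c : Z2),
    (* (i) At is a continuous extension of A, and it is the unique one *)
    [/\ Z2_continuous At,
        (forall n : nat, At (Z2_of_nat n) = Z2_of_nat (A n)) &
        (forall G : Z2 -> Z2, Z2_continuous G ->
           (forall n : nat, G (Z2_of_nat n) = Z2_of_nat (A n)) ->
           forall x, G x = At x)] /\
    (* (iii) c = lim c_k, c is the unique zero of At, digits of c *)
    [/\ (forall cs : nat -> nat,
           (forall k, 1 <= k -> cs k < 2 ^ k /\ 2 ^ k %| A (cs k)) ->
           Z2_lim (fun k => Z2_of_nat (cs k)) c),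
        At c = Z2_of_nat 0,
        (forall z : Z2, At z = Z2_of_nat 0 -> z = c),
        (forall i : nat, i < size c_digits -> Z2_digit c i = nth 0 c_digits i) &
    (* (iv) |At n|_2 = |n - c|_2 *)
        forall n : Z2, Z2_abs (At n) = Z2_dist n c].
Proof.
have cfA k : 2 ^ k %| A (cf k) by rewrite cf_spec modn_small ?cf_lt.
have AtN n : At (Z2_of_nat n) = Z2_of_nat (A n).
  apply: Z2_eq => k; rewrite resAt !resN; apply: A_per; by rewrite modn_mod.
split.
  move=> k _; exists (cf k); split; first by split; [exact: cf_lt | exact: cfA].
  by move=> y [yl yd]; apply/esym/cf_uniq.
exists At, cZ; split; first split.
- move=> x k; exists k => y H; by rewrite !resAt H.
- exact: AtN.
- move=> G Gc GN x; apply: Z2_eq => k.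
  have [m Hm] := Gc x k.
  have := Hm (Z2_of_nat (res x (maxn m k))).
  rewrite resN (res_le x _ _ (leq_maxl m k)).
  move=> /(_ erefl) <-; rewrite GN resN resAt.
  apply: A_per; by rewrite (res_le x _ _ (leq_maxr m k)) modn_small ?res_lt.
split.
- move=> cs Hcs k; exists k => m km.
  rewrite resN rescZ.
  case: m km => [|m] km.
    by move: km; rewrite leqn0 => /eqP ->; rewrite !modn1.
  have [l d] := Hcs m.+1 isT.
  rewrite (cf_uniq _ _ l d).
  exact: (res_le cZ _ _ km).
- apply: Z2_eq => k; rewrite resAt resN rescZ mod0n; exact/eqP/cfA.
- move=> z Hz; apply: Z2_eq => k; rewrite rescZ.
  have H0 : res (At z) k = res (Z2_of_nat 0) k by rewrite Hz.
  rewrite resAt resN mod0n in H0.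
  exact: (cf_uniq _ _ (res_lt z k) (introT eqP H0)).
- move=> i Hi; have Hi' : i < 26 by [].
  rewrite /Z2_digit rescZ.
  have cfS : cf i.+1 = if 2 ^ i.+1 %| A (cf i) then cf i else cf i + 2 ^ i by [].
  rewrite cfS (cf_step _ Hi' (cf_vN _ (ltnW Hi'))).
  move: (digits01 i); case: (nth 0 c_digits i) => [|[|//]] _.
    by rewrite eqxx divn_small ?cf_lt.
  rewrite /= addnC -{1}(mul1n (2 ^ i)) divnMDl ?expn_gt0 //.
  by rewrite divn_small ?cf_lt.
- move=> n; rewrite /Z2_abs; apply: dist_eq => k.
  rewrite resAt !resN rescZ mod0n; congr (~~ _).
  by rewrite -/(dvdn _ _) cf_spec modn_small ?res_lt.
Qed.
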